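(* Let $G$ be a group with subgroups $H,J$ such that $H\neq G$, $|J:H\cap J|=2$, $|H:H\cap J|$ is finite and $H\cap J$ is core-free in $G$, and let $\Gamma=\mathrm{Cos}(G,H,J)$. Let $g\in J\setminus(H\cap J)$ and $L=(H\cap H^g)\langle g\rangle$. Then $J\le L$, $\Gamma$ has constant edge-multiplicity $|L:J|$, and the base graph of $\Gamma$ is isomorphic to $\mathrm{Cos}(G,H,L)$, which is isomorphic to $\mathrm{SimpCos}(G,H,HgH)$. In particular $\Gamma$ is simple if and only if $J=(H\cap H^g)\langle g\rangle$, and in that case $\Gamma\cong\mathrm{SimpCos}(G,H,HgH)$.
   Context: A graph is a triple $(V,E,\mathbf I)$ with $\mathbf I\subseteq V\times E$ such that every edge is incident with exactly two distinct vertices (multiple edges allowed, no loops). It has edge-multiplicity $\lambda$ if every pair of adjacent vertices is incident with exactly $\lambda$ common edges; it is simple if $\lambda=1$. The base graph of a graph with constant edge-multiplicity is the simple graph on the same vertex set whose edges are the unordered pairs of adjacent vertices. Coset graph: for a group $G$ and subgroups $H,J$ with $H\ne G$, $|J:H\cap J|=2$, $|H:H\cap J|$ finite, $\mathrm{Cos}(G,H,J)$ has vertex set $\{Hx:x\in G\}$, edge set $\{Jy:y\in G\}$, and $Hx$ incident with $Jy$ iff $yx^{-1}\in JH$. $\mathrm{SimpCos}(G,H,HgH)$ is the simple graph with vertex set $\{Hx:x\in G\}$ in which $\{Hx,Hy\}$ is an edge iff $yx^{-1}\in HgH$. *)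

(* Defs.v *)
(* Groups are (possibly infinite) MathComp [groupType]s
   from mathcomp/boot/monoid.v; subsets of a group are Prop-valued
   predicates [T -> Prop]. *)
From mathcomp Require Import all_boot.
From mathcomp Require Import monoid.

Set Implicit Arguments.
Unset Strict Implicit.
Unset Printing Implicit Defensive.

Local Open Scope group_scope.

Section GroupDefs.
Variable T : groupType.
Implicit Types (H J K M : T -> Prop) (x y g : T).

Definition is_subgroup H : Prop :=
  H 1 /\ (forall x y, H x -> H y -> H (x * y)) /\ (forall x, H x -> H x^-1).

Definition subset_of H J : Prop := forall x, H x -> J x.
Definition pcap H J : T -> Prop := fun x => H x /\ J x.

Definition rcoset H x : T -> Prop := fun z => exists2 h, H h & z = h * x.

Definition conj_set H g : T -> Prop := fun z => exists2 h, H h & z = h ^ g.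

Definition prod_set H K : T -> Prop :=
  fun z => exists h, exists k, [/\ H h, K k & z = h * k].

Definition dcoset H g : T -> Prop :=
  fun z => exists h1, exists h2, [/\ H h1, H h2 & z = h1 * g * h2].

Definition cycle_set g : T -> Prop :=
  fun z => exists n : nat, z = g ^+ n \/ z = g ^- n.

Definition rcosets_in M K : Type :=
  {A : T -> Prop | exists2 x, M x & A = rcoset K x}.

Definition index_is M K (n : nat) : Prop :=
  exists f : rcosets_in M K -> 'I_n, bijective f.

Definition core_free K : Prop :=
  forall x, (forall y, conj_set K y x) -> x = 1.

End GroupDefs.

Record graph := Graph {
  vtx : Type;
  edg : Type;
  inc : vtx -> edg -> Prop
}.

Definition adjacent (G : graph) (u v : vtx G) : Prop :=
  u <> v /\ exists e, inc u e /\ inc v e.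

Definition common_edges (G : graph) (u v : vtx G) : Type :=
  {e : edg G | inc u e /\ inc v e}.

Definition edge_multiplicity (G : graph) (lam : nat) : Prop :=
  forall u v : vtx G, adjacent u v ->
    exists f : common_edges u v -> 'I_lam, bijective f.

Definition simple_graph (G : graph) : Prop := edge_multiplicity G 1.

Definition simple_graph_of (V : Type) (adj : V -> V -> Prop) : graph :=
  @Graph V
    {p : V -> Prop | exists u v, [/\ u <> v, adj u v &
                                  p = (fun w => w = u \/ w = v)]}
    (fun w e => sval e w).

Definition base_graph (G : graph) : graph :=
  simple_graph_of (@adjacent G).

Definition graph_iso (G1 G2 : graph) : Prop :=
  exists (f : vtx G1 -> vtx G2) (h : edg G1 -> edg G2),
    [/\ bijective f, bijective h &
        forall v e, inc v e <-> inc (f v) (h e)].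

Section CosetGraphs.
Variable T : groupType.
Local Open Scope group_scope.

Definition cos_vtx (H : T -> Prop) : Type :=
  {A : T -> Prop | exists x, A = rcoset H x}.

Definition Cos (H J : T -> Prop) : graph :=
  @Graph (cos_vtx H) (cos_vtx J)
    (fun A B => exists x, exists y,
       [/\ sval A = rcoset H x, sval B = rcoset J y &
           prod_set J H (y * x^-1)]).

Definition SimpCos (H : T -> Prop) (g : T) : graph :=
  simple_graph_of (fun A B : cos_vtx H => exists x, exists y,
       [/\ sval A = rcoset H x, sval B = rcoset H y &
           dcoset H g (y * x^-1)]).

End CosetGraphs.

(* Main.v *)
Require Import Defs.
From mathcomp Require Import all_boot.
From mathcomp Require Import monoid.
From Stdlib Require Import ClassicalEpsilon FunctionalExtensionality PropExtensionality ProofIrrelevance Classical.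
Local Open Scope group_scope.

Lemma pred_ext (A : Type) (P Q : A -> Prop) : (forall x, P x <-> Q x) -> P = Q.
Proof. move=> h; apply: functional_extensionality => x; exact: propositional_extensionality. Qed.

Lemma sig_ext (A : Type) (P : A -> Prop) (a b : {x | P x}) : sval a = sval b -> a = b.
Proof. case: a b => [a pa] [b pb] /= e; subst b; by rewrite (proof_irrelevance _ pa pb). Qed.

Lemma bij_of_rel (A B : Type) (R : A -> B -> Prop) :
  (forall a, exists b, R a b) -> (forall b, exists a, R a b) ->
  (forall a a' b, R a b -> R a' b -> a = a') ->
  (forall a b b', R a b -> R a b' -> b = b') ->
  exists f : A -> B, bijective f /\ forall a, R a (f a).
Proof.
move=> tot sur inj fun_.
pose f a := proj1_sig (constructive_indefinite_description _ (tot a)).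
pose g b := proj1_sig (constructive_indefinite_description _ (sur b)).
have Rf a : R a (f a) by rewrite /f; case: constructive_indefinite_description.
have Rg b : R (g b) b by rewrite /g; case: constructive_indefinite_description.
exists f; split => //; exists g.
- move=> a; apply: (inj _ _ (f a)) => //.
- move=> b; apply: (fun_ (g b)) => //.
Qed.

Lemma inj_of_rel (A B : Type) (R : A -> B -> Prop) :
  (forall a, exists b, R a b) ->
  (forall a a' b, R a b -> R a' b -> a = a') ->
  exists f : A -> B, injective f.
Proof.
move=> tot inj.
pose f a := proj1_sig (constructive_indefinite_description _ (tot a)).
have Rf a : R a (f a) by rewrite /f; case: constructive_indefinite_description.
exists f => a a' e; apply: (inj _ _ (f a)); [exact: Rf | rewrite e; exact: Rf].
Qed.

Definition pb (P : Prop) : bool := if excluded_middle_informative P then true else false.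
Lemma pbP (P : Prop) : pb P <-> P.
Proof. rewrite /pb; case: excluded_middle_informative => //. Qed.

Lemma fin_sub (A : Type) n (f : A -> 'I_n) : injective f ->
  exists m, exists h : A -> 'I_m, bijective h.
Proof.
move=> injf.
case: (classic (exists a : A, True)) => [[a0 _]|nA].
- pose P : {pred 'I_n} := [pred i | pb (exists a, f a = i)].
  have Pa0 : f a0 \in P by rewrite inE; apply/pbP; exists a0.
  exists #|P|, (fun a => enum_rank_in Pa0 (f a)).
  have ex (i : 'I_#|P|) : exists a, f a = enum_val i.
    by have /pbP := enum_valP i.
  pose g i := proj1_sig (constructive_indefinite_description _ (ex i)).
  have Hg i : f (g i) = enum_val i by rewrite /g; case: constructive_indefinite_description.
  exists g.
  + move=> a; apply: injf; rewrite Hg enum_rankK_in //.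
    by apply/pbP; exists a.
  + by move=> i; rewrite Hg enum_valK_in.
- exists 0.
  have F : A -> False by move=> a; apply: nA; exists a.
  exists (fun a => False_rect _ (F a)).
  exists (fun i : 'I_0 => False_rect _ (notF (ltn_ord i))).
  + by move=> a; case: (F a).
  + by case.
Qed.

Lemma iso_of (G1 G2 : graph) (f : vtx G1 -> vtx G2) : bijective f ->
  (forall e1 e2 : edg G1, (forall v, inc v e1 <-> inc v e2) -> e1 = e2) ->
  (forall e1 e2 : edg G2, (forall v, inc v e1 <-> inc v e2) -> e1 = e2) ->
  (forall e1, exists e2, forall v, inc v e1 <-> inc (f v) e2) ->
  (forall e2, exists e1, forall v, inc v e1 <-> inc (f v) e2) ->
  graph_iso G1 G2.
Proof.
move=> [f' fK f'K] ext1 ext2 tot sur.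
pose R := fun e1 e2 => forall v, inc v e1 <-> inc (f v) e2.
have i1 : forall a a' b, R a b -> R a' b -> a = a'.
  move=> a a' b Ra Ra'; apply: ext1 => v; split => [/Ra /Ra'|/Ra' /Ra] //.
have i2 : forall a b b', R a b -> R a b' -> b = b'.
  move=> a b b' Rb Rb'; apply: ext2 => w; rewrite -(f'K w).
  by split => [/Rb /Rb'|/Rb' /Rb].
have [h [bh Rh]] := @bij_of_rel _ _ R tot sur i1 i2.
exists f, h; split => //; first exact: Bijective fK f'K.
move=> v e; exact: Rh.
Qed.

Lemma sg_ext V (adj : V -> V -> Prop) (e1 e2 : edg (simple_graph_of adj)) :
  (forall v, inc v e1 <-> inc v e2) -> e1 = e2.
Proof. move=> h; apply: sig_ext; apply: pred_ext => v; exact: h v. Qed.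

Ltac gnorm_ := repeat (rewrite ?invgM ?invgK; first [rewrite mulgA | rewrite mulgK | rewrite mulgVK | rewrite mulVg | rewrite mulgV | rewrite mul1g | rewrite mulg1 | rewrite invg1 ]); rewrite ?invgM ?invgK.


Lemma sg1 {T : groupType} {K : T -> Prop} : is_subgroup K -> K 1.
Proof. by case. Qed.
Lemma sgM {T : groupType} {K : T -> Prop} {a b} : is_subgroup K -> K a -> K b -> K (a * b).
Proof. by case=> _ [h _]; apply: h. Qed.
Lemma sgV {T : groupType} {K : T -> Prop} {a} : is_subgroup K -> K a -> K a^-1.
Proof. by case=> _ [_ h]; apply: h. Qed.
Lemma sgVr {T : groupType} {K : T -> Prop} {a} : is_subgroup K -> K a^-1 -> K a.
Proof. by move=> sK /(sgV sK); rewrite invgK. Qed.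

Lemma rcoset_eq {T : groupType} (K : T -> Prop) a b : is_subgroup K ->
  (rcoset K a = rcoset K b <-> K (a * b^-1)).
Proof.
move=> sK; split.
- move=> e; have : rcoset K a a by exists 1; [exact: sg1 | rewrite mul1g].
  rewrite e => -[k Kk ->]; by rewrite mulgK.
- move=> Kab; apply: pred_ext => z; split => -[k Kk ->].
  + exists (k * (a * b^-1)); first exact: sgM. by gnorm_.
  + exists (k * (a * b^-1)^-1); first by apply: sgM => //; apply: sgV. by gnorm_.
Qed.

Definition cv {T : groupType} (K : T -> Prop) (x : T) : cos_vtx K :=
  exist _ (rcoset K x) (ex_intro _ x erefl).

Lemma cv_surj {T : groupType} (K : T -> Prop) (A : cos_vtx K) : exists x, A = cv K x.
Proof. case: A => A [x ex]; exists x; exact: sig_ext. Qed.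

Lemma cv_eq {T : groupType} (K : T -> Prop) a b : is_subgroup K ->
  (cv K a = cv K b <-> K (a * b^-1)).
Proof.
move=> sK; rewrite -rcoset_eq //; split => e; [exact: (congr1 sval e) | exact: sig_ext].
Qed.

Lemma incE {T : groupType} (H M : T -> Prop) (g x y : T) :
  is_subgroup H -> is_subgroup M -> M g ->
  (forall m, M m -> H m \/ H (m * g^-1)) ->
  (@inc (Cos H M) (cv H x) (cv M y) <-> cv H x = cv H y \/ cv H x = cv H (g * y)).
Proof.
move=> sH sM Mg FM; rewrite !cv_eq //; split.
- case=> x' [y' [/= eA eB [m [h [Mm Hh e]]]]].
  have {}eA := (rcoset_eq _ _ _ sH).1 eA.
  have {}eB := (rcoset_eq _ _ _ sM).1 eB.
  have em : m = y' * x'^-1 * h^-1 by rewrite e mulgK.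
  pose m2 := m^-1 * (y * y'^-1)^-1.
  have Mm2 : M m2.
    rewrite /m2; exact: sgM sM (sgV sM Mm) (sgV sM eB).
  case: (FM m2 Mm2) => Hm2; [left|right].
  + have -> : x * y^-1 = (x * x'^-1) * h^-1 * m2 by rewrite /m2 em; gnorm_.
    by apply: (sgM sH) Hm2; apply: (sgM sH) eA (sgV sH Hh).
  + have -> : x * (g * y)^-1 = (x * x'^-1) * h^-1 * (m2 * g^-1) by rewrite /m2 em; gnorm_.
    by apply: (sgM sH) Hm2; apply: (sgM sH) eA (sgV sH Hh).
- case=> Hxy.
  + exists x, y; split => //; exists 1, (y * x^-1); split.
    * exact: sg1.
    * by have := sgV sH Hxy; rewrite invgM invgK.
    * by rewrite mul1g.
  + exists x, y; split => //; exists g^-1, (g * y * x^-1); split.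
    * exact: sgV.
    * have -> : g * y * x^-1 = (x * (g * y)^-1)^-1 by gnorm_.
      exact: sgV.
    * by gnorm_.
Qed.

Lemma incE' {T : groupType} (H M : T -> Prop) (g : T) (w : cos_vtx H) (y : T) :
  is_subgroup H -> is_subgroup M -> M g ->
  (forall m, M m -> H m \/ H (m * g^-1)) ->
  (@inc (Cos H M) w (cv M y) <-> w = cv H y \/ w = cv H (g * y)).
Proof. move=> sH sM Mg FM; have [x ->] := cv_surj _ w; exact: incE. Qed.

Definition Kset {T : groupType} (H : T -> Prop) (g : T) : T -> Prop :=
  fun a => H a /\ H (g * a * g^-1).
Definition Lset {T : groupType} (H : T -> Prop) (g : T) : T -> Prop :=
  fun a => Kset H g a \/ Kset H g (a * g^-1).

Lemma Lkey {T : groupType} (H : T -> Prop) (g w : T) :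
  is_subgroup H -> ~ H g -> H (g * g) ->
  ((H w \/ H (w * g^-1)) /\ (H (g * w) \/ H (g * w * g^-1)) <-> Lset H g w).
Proof.
move=> sH nHg Hgg; split.
- case=> -[h1|h1] [h2|h2].
  + case: nHg; have -> : g = (g * w) * w^-1 by gnorm_.
    exact: (sgM sH) h2 (sgV sH h1).
  + by left.
  + right; split => //.
    have -> : g * (w * g^-1) * g^-1 = (g * w) * (g * g)^-1 by gnorm_.
    exact: (sgM sH) h2 (sgV sH Hgg).
  + case: nHg; have -> : g = (g * w * g^-1) * (w * g^-1)^-1 by gnorm_.
    exact: (sgM sH) h2 (sgV sH h1).
- case=> -[h1 h2].
  + by split; [left|right].
  + split; first by right.
    left; have -> : g * w = (g * (w * g^-1) * g^-1) * (g * g) by gnorm_.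
    exact: (sgM sH) h2 Hgg.
Qed.

Lemma pairP {T : groupType} (H : T -> Prop) (g a b : T) :
  is_subgroup H -> ~ H g -> H (g * g) ->
  ((cv H a = cv H b \/ cv H a = cv H (g * b)) /\
   (cv H (g * a) = cv H b \/ cv H (g * a) = cv H (g * b)) <-> Lset H g (a * b^-1)).
Proof.
move=> sH nHg Hgg; rewrite -Lkey // !cv_eq //.
have -> : a * (g * b)^-1 = a * b^-1 * g^-1 by gnorm_.
have -> : g * a * (g * b)^-1 = g * (a * b^-1) * g^-1 by gnorm_.
by have -> : g * a * b^-1 = g * (a * b^-1) by gnorm_.
Qed.


Lemma K_sg {T : groupType} (H : T -> Prop) g : is_subgroup H -> is_subgroup (Kset H g).
Proof.
move=> sH; split; [|split].
- by split; [exact: sg1 | rewrite mulg1 mulgV; exact: sg1].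
- move=> a b [a1 a2] [b1 b2]; split; first exact: sgM.
  have -> : g * (a * b) * g^-1 = (g * a * g^-1) * (g * b * g^-1) by gnorm_.
  exact: sgM.
- move=> a [a1 a2]; split; first exact: sgV.
  have -> : g * a^-1 * g^-1 = (g * a * g^-1)^-1 by gnorm_.
  exact: sgV.
Qed.

Lemma K_conj {T : groupType} (H : T -> Prop) g a : is_subgroup H -> H (g * g) ->
  Kset H g a -> Kset H g (g * a * g^-1).
Proof.
move=> sH Hgg [a1 a2]; split => //.
have -> : g * (g * a * g^-1) * g^-1 = (g * g) * a * (g * g)^-1 by gnorm_.
by exact: sgM sH (sgM sH Hgg a1) (sgV sH Hgg).
Qed.

Lemma K_conj' {T : groupType} (H : T -> Prop) g a : is_subgroup H -> H (g * g) ->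
  Kset H g a -> Kset H g (g^-1 * a * g).
Proof.
move=> sH Hgg [a1 a2]; split.
- have -> : g^-1 * a * g = (g * g)^-1 * (g * a * g^-1) * (g * g) by gnorm_.
  by exact: sgM sH (sgM sH (sgV sH Hgg) a2) Hgg.
- by have -> : g * (g^-1 * a * g) * g^-1 = a by gnorm_.
Qed.

Lemma Kgg {T : groupType} (H : T -> Prop) g : H (g * g) -> Kset H g (g * g).
Proof. by move=> Hgg; split => //; have -> : g * (g * g) * g^-1 = g * g by gnorm_. Qed.

Lemma L_sg {T : groupType} (H : T -> Prop) g : is_subgroup H -> H (g * g) ->
  is_subgroup (Lset H g).
Proof.
move=> sH Hgg; have sK := K_sg _ g sH; split; [|split].
- by left; exact: sg1.
- move=> x y [hx|hx] [hy|hy].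
  + by left; apply: sgM.
  + right; have -> : x * y * g^-1 = x * (y * g^-1) by gnorm_.
    exact: sgM.
  + right; have -> : x * y * g^-1 = (x * g^-1) * (g * y * g^-1) by gnorm_.
    by apply: sgM => //; apply: K_conj.
  + left; have -> : x * y = (x * g^-1) * (g * (y * g^-1) * g^-1) * (g * g) by gnorm_.
    exact: sgM sK (sgM sK hx (K_conj _ _ _ sH Hgg hy)) (Kgg _ _ Hgg).
- move=> x [hx|hx].
  + by left; apply: sgV.
  + right; have -> : x^-1 * g^-1 = (g^-1 * (x * g^-1)^-1 * g) * (g * g)^-1 by gnorm_.
    exact: sgM sK (K_conj' _ _ _ sH Hgg (sgV sK hx)) (sgV sK (Kgg _ _ Hgg)).
Qed.

Lemma Lg {T : groupType} (H : T -> Prop) g : is_subgroup H -> Lset H g g.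
Proof. move=> sH; right; rewrite mulgV; exact: (sg1 (K_sg _ g sH)). Qed.

Lemma KL {T : groupType} (H : T -> Prop) g a : Kset H g a -> Lset H g a.
Proof. by left. Qed.

Lemma FL {T : groupType} (H : T -> Prop) g m : Lset H g m -> H m \/ H (m * g^-1).
Proof. by case=> -[h _]; [left|right]. Qed.

Lemma L_eq {T : groupType} (H : T -> Prop) g : is_subgroup H -> H (g * g) ->
  prod_set (pcap H (conj_set H g)) (cycle_set g) = Lset H g.
Proof.
move=> sH Hgg; have sL := L_sg _ _ sH Hgg.
have Kc a : pcap H (conj_set H g) a <-> Kset H g a.
  split=> -[h1 h2]; split => //.
  - by case: h2 => h Hh ->; rewrite conjgE; have -> : g * (g^-1 * (h * g)) * g^-1 = h by gnorm_.
  - by exists (g * a * g^-1) => //; rewrite conjgE; gnorm_.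
have Lpow n : Lset H g (g ^+ n).
  elim: n => [|n IH]; first by rewrite expg0; exact: sg1.
  by rewrite expgS; apply: sgM sL (Lg _ g sH) IH.
apply: pred_ext => z; split.
- case=> h [k [/Kc Kh [n [->|->]] ->]].
  + exact: sgM sL (KL _ _ _ Kh) (Lpow n).
  + exact: sgM sL (KL _ _ _ Kh) (sgV sL (Lpow n)).
- case=> hz.
  + exists z, 1; split; [exact/Kc | by exists 0%N; left | by rewrite mulg1].
  + exists (z * g^-1), g; split; [exact/Kc | by exists 1%N; left; rewrite expg1 | by gnorm_].
Qed.

Lemma ord2_three (i j k : 'I_2) : i = j \/ i = k \/ j = k.
Proof.
suff: (val i == val j) || (val i == val k) || (val j == val k).
  by case/orP => [/orP[]|] /eqP/val_inj; auto.
by case: i j k => [[|[|i]] Hi] [[|[|j]] Hj] [[|[|k]] Hk].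
Qed.

Lemma S_sg {T : groupType} (H J : T -> Prop) : is_subgroup H -> is_subgroup J ->
  is_subgroup (pcap H J).
Proof.
move=> sH sJ; split; [|split].
- by split; apply: sg1.
- by move=> x y [? ?] [? ?]; split; apply: sgM.
- by move=> x [? ?]; split; apply: sgV.
Qed.

Lemma three {T : groupType} (H J : T -> Prop) a b c : is_subgroup H -> is_subgroup J ->
  index_is J (pcap H J) 2 -> J a -> J b -> J c ->
  pcap H J (a * b^-1) \/ pcap H J (a * c^-1) \/ pcap H J (b * c^-1).
Proof.
move=> sH sJ [f bf] Ja Jb Jc.
have sS := S_sg _ _ sH sJ.
pose r x (Jx : J x) : rcosets_in J (pcap H J) := exist _ (rcoset (pcap H J) x) (ex_intro2 _ _ x Jx erefl).
have key x y Jx Jy : f (r x Jx) = f (r y Jy) -> pcap H J (x * y^-1).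
  move/(bij_inj bf)/(congr1 sval) => /=; exact: (rcoset_eq _ _ _ sS).1.
have := ord2_three (f (r a Ja)) (f (r b Jb)) (f (r c Jc)).
by case=> [/key|[/key|/key]]; auto.
Qed.

Lemma Sgg {T : groupType} (H J : T -> Prop) g : is_subgroup H -> is_subgroup J ->
  index_is J (pcap H J) 2 -> J g -> ~ H g -> pcap H J (g * g).
Proof.
move=> sH sJ idx Jg nHg.
have Jgg : J (g * g) by apply: sgM.
case: (three _ _ (g * g) g 1 sH sJ idx Jgg Jg (sg1 sJ)) => [[h _]|[|[h _]]].
- by case: nHg; move: h; rewrite mulgK.
- by rewrite invg1 mulg1.
- by case: nHg; move: h; rewrite invg1 mulg1.
Qed.

Lemma FJ {T : groupType} (H J : T -> Prop) g m : is_subgroup H -> is_subgroup J ->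
  index_is J (pcap H J) 2 -> J g -> ~ H g -> J m -> H m \/ H (m * g^-1).
Proof.
move=> sH sJ idx Jg nHg Jm.
case: (three _ _ m g 1 sH sJ idx Jm Jg (sg1 sJ)) => [[h _]|[[h _]|[h _]]].
- by right.
- by left; move: h; rewrite invg1 mulg1.
- by case: nHg; move: h; rewrite invg1 mulg1.
Qed.

Lemma SK {T : groupType} (H J : T -> Prop) g s : is_subgroup H -> is_subgroup J ->
  index_is J (pcap H J) 2 -> J g -> ~ H g -> pcap H J s -> Kset H g s.
Proof.
move=> sH sJ idx Jg nHg [Hs Js]; split => //.
have [Hgg _] := Sgg _ _ _ sH sJ idx Jg nHg.
have Jx : J (g * s * g^-1) by exact: sgM sJ (sgM sJ Jg Js) (sgV sJ Jg).
case: (three _ _ _ g 1 sH sJ idx Jx Jg (sg1 sJ)) => [[h _]|[[h _]|[h _]]].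
- case: nHg; have -> : g = (g * s * g^-1 * g^-1) * (g * g) * s^-1 by gnorm_.
  exact: sgM sH (sgM sH h Hgg) (sgV sH Hs).
- by move: h; rewrite invg1 mulg1.
- by case: nHg; move: h; rewrite invg1 mulg1.
Qed.

Lemma JL {T : groupType} (H J : T -> Prop) g x : is_subgroup H -> is_subgroup J ->
  index_is J (pcap H J) 2 -> J g -> ~ H g -> J x -> Lset H g x.
Proof.
move=> sH sJ idx Jg nHg Jx.
case: (FJ _ _ _ _ sH sJ idx Jg nHg Jx) => h.
- by left; apply: (SK _ _ _ _ sH sJ idx Jg nHg).
- right; apply: (SK _ _ _ _ sH sJ idx Jg nHg); split => //; exact: sgM sJ Jx (sgV sJ Jg).
Qed.

Lemma adj_rep {T : groupType} (H J : T -> Prop) g (u v : cos_vtx H) :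
  is_subgroup H -> is_subgroup J -> J g -> (forall m, J m -> H m \/ H (m * g^-1)) ->
  H (g * g) -> @adjacent (Cos H J) u v -> exists z0, u = cv H z0 /\ v = cv H (g * z0).
Proof.
move=> sH sJ Jg FJ' Hgg [neq [e [iu iv]]].
have [z ez] := cv_surj _ e; subst e.
move: iu iv; rewrite !(incE' _ _ g) // => -[eu|eu] [ev|ev]; subst u v.
- by case: neq.
- by exists z.
- exists (g * z); split => //; apply/cv_eq => //.
  have -> : z * (g * (g * z))^-1 = (g * g)^-1 by gnorm_.
  exact: sgV.
- by case: neq.
Qed.

Lemma neq_g {T : groupType} (H : T -> Prop) g z : is_subgroup H -> ~ H g ->
  cv H z <> cv H (g * z).
Proof.
move=> sH nHg /(cv_eq _ _ _ sH); have -> : z * (g * z)^-1 = g^-1 by gnorm_.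
by move/(sgVr sH).
Qed.

Lemma adj_of {T : groupType} (H J : T -> Prop) g z :
  is_subgroup H -> is_subgroup J -> J g -> (forall m, J m -> H m \/ H (m * g^-1)) ->
  ~ H g -> @adjacent (Cos H J) (cv H z) (cv H (g * z)).
Proof.
move=> sH sJ Jg FJ' nHg; split; first exact: neq_g.
by exists (cv J z); rewrite !(incE' _ _ g) //; split; [left|right].
Qed.

Lemma edge_char {T : groupType} (H M : T -> Prop) g z0 z :
  is_subgroup H -> is_subgroup M -> M g -> (forall m, M m -> H m \/ H (m * g^-1)) ->
  ~ H g -> H (g * g) ->
  (@inc (Cos H M) (cv H z0) (cv M z) /\ @inc (Cos H M) (cv H (g * z0)) (cv M z)
   <-> Lset H g (z0 * z^-1)).
Proof.
move=> sH sM Mg FM nHg Hgg; rewrite -pairP // !(incE _ _ g) //.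
Qed.

Lemma L_ext {T : groupType} (H : T -> Prop) g (e1 e2 : edg (Cos H (Lset H g))) :
  is_subgroup H -> ~ H g -> H (g * g) ->
  (forall v, inc v e1 <-> inc v e2) -> e1 = e2.
Proof.
move=> sH nHg Hgg h.
have sL := L_sg _ _ sH Hgg; have Lg' := Lg _ g sH.
have [z1 ez1] := cv_surj _ e1; have [z2 ez2] := cv_surj _ e2; subst e1 e2.
apply/cv_eq => //; apply/(pairP _ _ _ _ sH nHg Hgg).
rewrite -!(incE _ _ _ _ _ sH sL Lg' (@FL _ H g)).
split; apply/h; rewrite (incE _ _ g) //; try exact: FL.
- by left.
- by right.
Qed.

Lemma common_bij {T : groupType} (H J : T -> Prop) g (u v : cos_vtx H) :
  is_subgroup H -> is_subgroup J -> J g -> (forall m, J m -> H m \/ H (m * g^-1)) ->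
  ~ H g -> H (g * g) -> @adjacent (Cos H J) u v ->
  exists phi : @common_edges (Cos H J) u v -> rcosets_in (Lset H g) J, bijective phi.
Proof.
move=> sH sJ Jg FJ' nHg Hgg adj.
have sL := L_sg _ _ sH Hgg.
have [z0 [eu ev]] := adj_rep _ _ _ _ _ sH sJ Jg FJ' Hgg adj; subst u v.
pose R (e : @common_edges (Cos H J) (cv H z0) (cv H (g * z0))) (c : rcosets_in (Lset H g) J) :=
  exists z, sval e = cv J z /\ sval c = rcoset J (z * z0^-1).
have tot : forall e, exists c, R e c.
  case=> e' ie; have [z ez] := cv_surj _ e'; subst e'.
  have Lz : Lset H g (z * z0^-1).
    have -> : z * z0^-1 = (z0 * z^-1)^-1 by gnorm_.
    by apply: (sgV sL); apply/(edge_char _ _ _ _ _ sH sJ Jg FJ' nHg Hgg).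
  by exists (exist _ (rcoset J (z * z0^-1)) (ex_intro2 _ _ _ Lz erefl)), z.
have sur : forall c, exists e, R e c.
  case=> A [x Lx eA].
  have ie : @inc (Cos H J) (cv H z0) (cv J (x * z0)) /\ @inc (Cos H J) (cv H (g * z0)) (cv J (x * z0)).
    apply/(edge_char _ _ _ _ _ sH sJ Jg FJ' nHg Hgg).
    have -> : z0 * (x * z0)^-1 = x^-1 by gnorm_.
    exact: sgV.
  by exists (exist _ (cv J (x * z0)) ie), (x * z0); split => //=; rewrite eA mulgK.
have i1 : forall e e' c, R e c -> R e' c -> e = e'.
  move=> e e' c [z [ez ec]] [z' [ez' ec']]; apply: sig_ext; rewrite ez ez'.
  apply/cv_eq => //; move: (rcoset_eq J (z * z0^-1) (z' * z0^-1) sJ).1.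
  rewrite -ec -ec' => /(_ erefl).
  by have -> : z * z0^-1 * (z' * z0^-1)^-1 = z * z'^-1 by gnorm_.
have i2 : forall e c c', R e c -> R e c' -> c = c'.
  move=> e c c' [z [ez ec]] [z' [ez' ec']]; apply: sig_ext; rewrite ec ec'.
  apply/rcoset_eq => //; move: (cv_eq J z z' sJ).1; rewrite -ez -ez' => /(_ erefl).
  by have -> : z * z0^-1 * (z' * z0^-1)^-1 = z * z'^-1 by gnorm_.
have [phi [bphi _]] := @bij_of_rel _ _ R tot sur i1 i2.
by exists phi.
Qed.

Lemma idx_fin {T : groupType} (H J : T -> Prop) g n :
  is_subgroup H -> is_subgroup J -> J g -> H (g * g) ->
  index_is H (pcap H J) n ->
  exists lam, exists beta : rcosets_in (Lset H g) J -> 'I_lam, bijective beta.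
Proof.
move=> sH sJ Jg Hgg [iota biota].
have sS := S_sg _ _ sH sJ.
pose R (c : rcosets_in (Lset H g) J) (d : rcosets_in H (pcap H J)) :=
  exists k, [/\ Kset H g k, sval c = rcoset J k & sval d = rcoset (pcap H J) k].
have tot : forall c, exists d, R c d.
  case=> A [x Lx eA].
  have [k [Kk ek]] : exists k, Kset H g k /\ rcoset J x = rcoset J k.
    case: Lx => Kx; first by exists x.
    exists (g^-1 * x); split.
      have := K_conj' _ _ _ sH Hgg Kx.
      by have -> : g^-1 * (x * g^-1) * g = g^-1 * x by gnorm_.
    apply/rcoset_eq => //.
    by have -> : x * (g^-1 * x)^-1 = g by gnorm_.
  have Hk : H k by case: Kk.
  by exists (exist _ (rcoset (pcap H J) k) (ex_intro2 _ _ k Hk erefl)), k; split => //=; rewrite eA.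
have inj : forall c c' d, R c d -> R c' d -> c = c'.
  move=> c c' d [k [_ ec ed]] [k' [_ ec' ed']]; apply: sig_ext; rewrite ec ec'.
  apply/rcoset_eq => //.
  have : rcoset (pcap H J) k = rcoset (pcap H J) k' by rewrite -ed -ed'.
  by move/(rcoset_eq _ _ _ sS) => [].
have [phi iphi] := @inj_of_rel _ _ R tot inj.
apply: (@fin_sub _ n (iota \o phi)).
move=> a b /(bij_inj biota); exact: iphi.
Qed.

Theorem theorem1p2 (T : groupType) (H J : T -> Prop) (g : T) :
  is_subgroup H -> is_subgroup J ->
  (exists x, ~ H x) ->
  index_is J (pcap H J) 2 ->
  (exists n, index_is H (pcap H J) n) ->
  core_free (pcap H J) ->
  J g -> ~ H g ->
  let L := prod_set (pcap H (conj_set H g)) (cycle_set g) in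
  [/\ subset_of J L,
      (exists lam, index_is L J lam /\ edge_multiplicity (Cos H J) lam),
      graph_iso (base_graph (Cos H J)) (Cos H L),
      graph_iso (Cos H L) (SimpCos H g) &
      ((simple_graph (Cos H J) <-> J = L) /\
       (J = L -> graph_iso (Cos H J) (SimpCos H g)))].
Proof.
move=> sH sJ _ idx [n idxH] _ Jg nHg L.
have [Hgg Jgg] := Sgg _ _ _ sH sJ idx Jg nHg.
have FJ' := fun m => FJ _ _ g m sH sJ idx Jg nHg.
have sL := L_sg _ _ sH Hgg.
have Lg' := Lg _ g sH.
have FL' := @FL _ H g.
have eL : L = Lset H g by exact: L_eq.
rewrite eL.
have JL' : subset_of J (Lset H g) := fun x => JL _ _ _ x sH sJ idx Jg nHg.
have [lam [beta bbeta]] := idx_fin _ _ _ _ sH sJ Jg Hgg idxH.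
have mult : forall l (b : rcosets_in (Lset H g) J -> 'I_l), bijective b ->
    edge_multiplicity (Cos H J) l.
  move=> l b bb u v adj; have [phi bphi] := common_bij _ _ _ u v sH sJ Jg FJ' nHg Hgg adj.
  exists (b \o phi); exact: bij_comp.
have iso2 : graph_iso (Cos H (Lset H g)) (SimpCos H g).
  apply: (@iso_of (Cos H (Lset H g)) (SimpCos H g) (fun x : cos_vtx H => x)).
  - by exists (fun x => x).
  - by move=> e1 e2; exact: L_ext.
  - by move=> e1 e2; exact: sg_ext.
  - move=> e1; have [z ez] := cv_surj _ e1; subst e1.
    have pf : exists u v : cos_vtx H, [/\ u <> v,
        (exists x y, [/\ sval u = rcoset H x, sval v = rcoset H y & dcoset H g (y * x^-1)]) &
        (fun w => w = cv H z \/ w = cv H (g * z)) = (fun w => w = u \/ w = v)].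
      exists (cv H z), (cv H (g * z)); split => //; first exact: neq_g.
      exists z, (g * z); split => //; exists 1, 1; split; try exact: sg1.
      by gnorm_.
    by exists (exist _ (fun w => w = cv H z \/ w = cv H (g * z)) pf : edg (SimpCos H g)) => w; rewrite (incE' _ _ g) //; exact: iff_refl.
  - case=> p [u [v [neq [x [y [eu ev [h1 [h2 [H1 H2 e]]]]]] ep]]].
    have ey : y = h1 * g * h2 * x by rewrite -e mulgVK.
    subst y.
    have eu' : u = cv H x by apply: sig_ext.
    have ev' : v = cv H (h1 * g * h2 * x) by apply: sig_ext.
    subst u v p.
    exists (cv (Lset H g) (h2 * x)) => w; rewrite (incE' _ _ g) //.
    have -> : cv H (h2 * x) = cv H x.
      by apply/cv_eq => //; have -> : h2 * x * x^-1 = h2 by gnorm_.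
    have -> : cv H (g * (h2 * x)) = cv H (h1 * g * h2 * x).
      apply/cv_eq => //.
      have -> : g * (h2 * x) * (h1 * g * h2 * x)^-1 = h1^-1 by gnorm_.
      exact: sgV.
    done.
split => //.
- by exists lam; split; [exists beta | exact: mult bbeta].
- apply: (@iso_of (base_graph (Cos H J)) (Cos H (Lset H g)) (fun x : cos_vtx H => x)).
  + by exists (fun x => x).
  + by move=> e1 e2; exact: sg_ext.
  + by move=> e1 e2; exact: L_ext.
  + case=> p [u [v [neq adj ep]]]; subst p.
    have [z0 [eu ev]] := adj_rep _ _ _ _ _ sH sJ Jg FJ' Hgg adj; subst u v.
    by exists (cv (Lset H g) z0) => w; rewrite (incE' _ _ g) //; exact: iff_refl.
  + move=> e2; have [z ez] := cv_surj _ e2; subst e2.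
    have pf : exists u v : cos_vtx H, [/\ u <> v, @adjacent (Cos H J) u v &
        (fun w => w = cv H z \/ w = cv H (g * z)) = (fun w => w = u \/ w = v)].
      exists (cv H z), (cv H (g * z)); split => //; first exact: neq_g.
      exact: adj_of.
    by exists (exist _ (fun w => w = cv H z \/ w = cv H (g * z)) pf : edg (base_graph (Cos H J))) => w; rewrite (incE' _ _ g) //; exact: iff_refl.
- split; last by move=> ->.
  split.
  + move=> sm.
    have adj := adj_of _ _ g 1 sH sJ Jg FJ' nHg.
    have [phi [phi' _ K2]] := common_bij _ _ _ _ _ sH sJ Jg FJ' nHg Hgg adj.
    have [f bf] := sm _ _ adj.
    have LJ x : Lset H g x -> J x.
      move=> Lx.
      pose cx : rcosets_in (Lset H g) J := exist _ (rcoset J x) (ex_intro2 _ _ x Lx erefl).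
      pose c1 : rcosets_in (Lset H g) J := exist _ (rcoset J 1) (ex_intro2 _ _ 1 (sg1 sL) erefl).
      have e : f (phi' cx) = f (phi' c1) by rewrite (ord1 (f (phi' cx))) (ord1 (f (phi' c1))).
      have := congr1 phi (bij_inj bf e); rewrite !K2 => /(congr1 sval) /=.
      by move/(rcoset_eq _ _ _ sJ); rewrite invg1 mulg1.
    by apply: pred_ext => x; split; [exact: JL' | exact: LJ].
  + move=> eJ; rewrite /simple_graph; apply: (mult 1%N (fun _ : rcosets_in (Lset H g) J => (ord0 : 'I_1))).
    pose c1 : rcosets_in (Lset H g) J := exist _ (rcoset J 1) (ex_intro2 _ _ 1 (sg1 sL) erefl).
    exists (fun _ => c1).
    * case=> A [x Lx eA]; apply: sig_ext => /=; rewrite eA.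
      apply/rcoset_eq => //; rewrite mul1g; apply: sgV => //.
      by rewrite eJ.
    * by move=> i; rewrite (ord1 i).
Qed.
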